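(* Let $1<\alpha<2$, $a<b$, and $q\in C[a,b]$. Suppose the boundary value problem $$T^a_\alpha u(t)+q(t)u(t)=0\ \ (a<t<b),\qquad u(a)=u(b)=0,$$ has a solution $u\in AC^2[a,b]$, twice differentiable on $(a,b)$, such that $u(t)\ne0$ for almost every $t\in(a,b)$. Then $$\int_a^b |q(s)|\,(s-a)^{\alpha-2}\,ds\ \ge\ \frac{4}{b-a}.$$
   Context: Conformable derivative: for $0<\beta<1$ and a function $h:[a,\infty)\to\mathbb{R}$, $T^a_\beta h(t)=\lim_{\varepsilon\to0}\frac{h(t+\varepsilon(t-a)^{1-\beta})-h(t)}{\varepsilon}$ for $t>a$, whenever the limit exists. For $1<\alpha<2$ and $g$ with derivative $g'$, $T^a_\alpha g(t)=T^a_{\alpha-1}g'(t)$; for $t>a$ this exists iff $g'$ is differentiable at $t$, and then $T^a_\alpha g(t)=(t-a)^{2-\alpha}g''(t)$. $AC^2[a,b]=\{u\in C^1[a,b]: u'\text{ absolutely continuous on }[a,b]\}$. A solution satisfies the equation at every $t\in(a,b)$ and the boundary conditions. *)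

(* Defs.v *)
From Stdlib Require Import Reals Lra List.
Import ListNotations.
Open Scope R_scope.

Definition continuous_on_cc (f : R -> R) (a b : R) : Prop :=
  forall t, a <= t <= b -> forall eps, 0 < eps -> exists delta, 0 < delta /\
    forall s, a <= s <= b -> Rabs (s - t) < delta -> Rabs (f s - f t) < eps.

Definition deriv_on_cc (f f' : R -> R) (a b : R) : Prop :=
  forall t, a <= t <= b -> forall eps, 0 < eps -> exists delta, 0 < delta /\
    forall s, a <= s <= b -> s <> t -> Rabs (s - t) < delta ->
      Rabs ((f s - f t) / (s - t) - f' t) < eps.

Fixpoint pairwise_disjoint (l : list (R * R)) : Prop :=
  match l with
  | [] => True
  | p :: l' => Forall (fun r => snd p <= fst r \/ snd r <= fst p) l' /\ pairwise_disjoint l'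
  end.

Definition abs_continuous_on (f : R -> R) (a b : R) : Prop :=
  forall eps, 0 < eps -> exists delta, 0 < delta /\
    forall l : list (R * R),
      Forall (fun p => a <= fst p <= snd p /\ snd p <= b) l ->
      pairwise_disjoint l ->
      fold_right (fun p s => (snd p - fst p) + s) 0 l < delta ->
      fold_right (fun p s => Rabs (f (snd p) - f (fst p)) + s) 0 l < eps.

Definition null_set (S : R -> Prop) : Prop :=
  forall eps, 0 < eps -> exists c d : nat -> R,
    (forall n, c n <= d n) /\
    (forall x, S x -> exists n, c n < x < d n) /\
    (forall N, sum_f_R0 (fun n => d n - c n) N < eps).

Definition conformable_deriv_lim (beta a : R) (h : R -> R) (t l : R) : Prop :=
  forall eps, 0 < eps -> exists delta, 0 < delta /\
    forall e, e <> 0 -> Rabs e < delta ->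
      Rabs ((h (t + e * Rpower (t - a) (1 - beta)) - h t) / e - l) < eps.

(* For 1<alpha<2: T^a_alpha g (t) = T^a_{alpha-1} g' (t), g' the derivative of g. *)
Definition conformable_deriv2_lim (alpha a : R) (g' : R -> R) (t l : R) : Prop :=
  conformable_deriv_lim (alpha - 1) a g' t l.

Definition improper_integral_left (f : R -> R) (a b I : R) : Prop :=
  forall eps, 0 < eps -> exists delta, 0 < delta /\
    forall c, a < c < a + delta -> c < b ->
      exists pr : Riemann_integrable f c b, Rabs (RiemannInt pr - I) < eps.

(* Main.v *)
Require Import Defs.
From Stdlib Require Import Reals Lra List Classical Arith Lia.
From Coquelicot Require Import Coquelicot.
Import ListNotations.
Open Scope R_scope.

Definition clamp (a b s : R) := Rmax a (Rmin b s).

Lemma clamp_in a b s : a <= b -> a <= clamp a b s <= b.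
Proof. intros; unfold clamp, Rmax, Rmin; repeat destruct Rle_dec; lra. Qed.

Lemma clamp_id a b s : a <= s <= b -> clamp a b s = s.
Proof. intros; unfold clamp, Rmax, Rmin; repeat destruct Rle_dec; lra. Qed.

Lemma clamp_lip a b s t : a <= b -> Rabs (clamp a b s - clamp a b t) <= Rabs (s - t).
Proof. intros; unfold clamp, Rmax, Rmin, Rabs; repeat destruct Rle_dec; repeat destruct Rcase_abs; lra. Qed.

Lemma cont_clamp f a b : a <= b -> continuous_on_cc f a b ->
  forall t, continuity_pt (fun s => f (clamp a b s)) t.
Proof.
  intros Hab H t eps Heps.
  destruct (H (clamp a b t) (clamp_in a b t Hab) eps Heps) as [d [Hd Hc]].
  exists d; split; auto. intros x [_ Hx]. simpl in *. unfold R_dist in *.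
  apply Hc. apply clamp_in; auto.
  eapply Rle_lt_trans. apply clamp_lip; auto. auto.
Qed.

Lemma cont_clamp' f a b : a <= b -> continuous_on_cc f a b ->
  forall t, continuous (fun s => f (clamp a b s)) t.
Proof. intros. apply continuity_pt_filterlim. apply cont_clamp; auto. Qed.

Lemma deriv_cont u u' a b : deriv_on_cc u u' a b -> continuous_on_cc u a b.
Proof.
  intros H t Ht eps Heps.
  destruct (H t Ht 1 Rlt_0_1) as [d [Hd Hc]].
  set (K := Rabs (u' t) + 1).
  assert (HK : 0 < K) by (unfold K; pose proof (Rabs_pos (u' t)); lra).
  exists (Rmin d (eps / K)); split.
  { apply Rmin_pos; auto. apply Rdiv_lt_0_compat; auto. }
  intros s Hs Hst.
  destruct (Req_dec s t) as [->|Hne].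
  { rewrite Rminus_eq_0, Rabs_R0; auto. }
  assert (Hst1 : Rabs (s - t) < d) by (eapply Rlt_le_trans; [apply Hst| apply Rmin_l]).
  assert (Hst2 : Rabs (s - t) < eps / K) by (eapply Rlt_le_trans; [apply Hst| apply Rmin_r]).
  specialize (Hc s Hs Hne Hst1).
  set (D := (u s - u t) / (s - t)) in *.
  assert (Hne' : s - t <> 0) by lra.
  assert (E : u s - u t = D * (s - t)) by (unfold D; field; auto).
  rewrite E, Rabs_mult.
  assert (HD : Rabs D < K).
  { unfold K. replace D with ((D - u' t) + u' t) by ring.
    eapply Rle_lt_trans. apply Rabs_triang. lra. }
  assert (Hp : 0 < Rabs (s - t)) by (apply Rabs_pos_lt; auto).
  apply Rle_lt_trans with (K * Rabs (s - t)).
  { apply Rmult_le_compat_r; lra. }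
  replace eps with (K * (eps / K)) by (field; lra).
  apply Rmult_lt_compat_l; auto.
Qed.

Lemma deriv_interior u u' a b t : deriv_on_cc u u' a b -> a < t < b ->
  derivable_pt_lim (fun s => u (clamp a b s)) t (u' t).
Proof.
  intros H Ht eps Heps.
  destruct (H t ltac:(lra) eps Heps) as [d [Hd Hc]].
  assert (Hp : 0 < Rmin d (Rmin (t - a) (b - t))).
  { repeat apply Rmin_pos; lra. }
  exists (mkposreal _ Hp). intros h Hh Hhd. simpl in Hhd.
  assert (Hh1 : Rabs h < d) by (eapply Rlt_le_trans; [apply Hhd| apply Rmin_l]).
  assert (Hh2 : Rabs h < Rmin (t - a) (b - t)) by (eapply Rlt_le_trans; [apply Hhd| apply Rmin_r]).
  assert (Hh3 : Rabs h < t - a) by (eapply Rlt_le_trans; [apply Hh2| apply Rmin_l]).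
  assert (Hh4 : Rabs h < b - t) by (eapply Rlt_le_trans; [apply Hh2| apply Rmin_r]).
  assert (Hb : - Rabs h <= h <= Rabs h) by (unfold Rabs; destruct Rcase_abs; lra).
  rewrite (clamp_id a b (t + h)) by lra. rewrite (clamp_id a b t) by lra.
  specialize (Hc (t + h) ltac:(lra) ltac:(lra)).
  replace (t + h - t) with h in Hc by ring. apply Hc; auto.
Qed.

Lemma conf_deriv beta a g t l : 0 < Rpower (t - a) (1 - beta) ->
  conformable_deriv_lim beta a g t l -> derivable_pt_lim g t (l / Rpower (t - a) (1 - beta)).
Proof.
  intros Hk H eps Heps.
  set (k := Rpower (t - a) (1 - beta)) in *.
  destruct (H (eps * k) ltac:(apply Rmult_lt_0_compat; auto)) as [d [Hd Hc]].
  assert (Hp : 0 < d * k) by (apply Rmult_lt_0_compat; auto).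
  exists (mkposreal _ Hp). intros h Hh Hhd. simpl in Hhd.
  assert (He : h / k <> 0).
  { unfold Rdiv. apply Rmult_integral_contrapositive; split; auto. apply Rinv_neq_0_compat; lra. }
  assert (Hed : Rabs (h / k) < d).
  { unfold Rdiv. rewrite Rabs_mult, Rabs_inv, (Rabs_right k) by lra.
    apply Rmult_lt_reg_r with k; auto. rewrite Rmult_assoc, Rinv_l, Rmult_1_r by lra; lra. }
  specialize (Hc (h / k) He Hed).
  fold k in Hc. replace (t + h / k * k) with (t + h) in Hc by (field; lra).
  replace ((g (t + h) - g t) / h - l / k) with (((g (t + h) - g t) / (h / k) - l) / k)
    by (field; split; lra).
  unfold Rdiv at 1. rewrite Rabs_mult, Rabs_inv, (Rabs_right k) by lra.
  apply Rmult_lt_reg_r with k; auto. rewrite Rmult_assoc, Rinv_l, Rmult_1_r by lra. exact Hc.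
Qed.

Fixpoint lsum (L : list (R*R)) : R :=
  match L with nil => 0 | p :: L' => (snd p - fst p) + lsum L' end.

Lemma lsum_app l1 l2 : lsum (l1 ++ l2) = lsum l1 + lsum l2.
Proof. induction l1; simpl; [ring| rewrite IHl1; ring]. Qed.

Lemma lsum_nonneg L : (forall p, In p L -> fst p <= snd p) -> 0 <= lsum L.
Proof.
  induction L; simpl; intros H; [lra|].
  assert (fst a <= snd a) by (apply H; auto).
  assert (0 <= lsum L) by (apply IHL; auto). lra.
Qed.

Lemma cover_fin n : forall L, (length L <= n)%nat -> (forall p, In p L -> fst p <= snd p) ->
  forall x y, x <= y -> (forall z, x <= z <= y -> exists p, In p L /\ fst p < z < snd p) ->
  y - x <= lsum L.
Proof.
  induction n; intros L HL Hle x y Hxy Hc.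
  - destruct L; [|simpl in HL; lia].
    destruct (Hc x ltac:(lra)) as [p [[] _]].
  - destruct (Hc x ltac:(lra)) as [p [Hp Hpx]].
    destruct (in_split p L Hp) as [l1 [l2 ->]].
    rewrite lsum_app. simpl.
    assert (H1 : 0 <= lsum l1) by (apply lsum_nonneg; intros; apply Hle; apply in_or_app; auto).
    assert (H2 : 0 <= lsum l2) by (apply lsum_nonneg; intros; apply Hle; apply in_or_app; simpl; auto).
    destruct (Rlt_dec y (snd p)) as [Hy|Hy].
    + lra.
    + assert (IH : y - snd p <= lsum (l1 ++ l2)).
      { apply IHn.
        - rewrite length_app in *; simpl in HL; lia.
        - intros q Hq; apply Hle. apply in_app_or in Hq; apply in_or_app; simpl; tauto.
        - lra.
        - intros z Hz. destruct (Hc z ltac:(lra)) as [q [Hq Hqz]].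
          exists q; split; auto. apply in_app_or in Hq; apply in_or_app.
          destruct Hq as [Hq|[Hq|Hq]]; auto. subst q; lra. }
      rewrite lsum_app in IH. lra.
Qed.

Lemma lsum_seq (c d : nat -> R) N :
  lsum (map (fun n => (c n, d n)) (seq 0 (S N))) = sum_f_R0 (fun n => d n - c n) N.
Proof.
  induction N.
  - simpl. ring.
  - rewrite seq_S, map_app, lsum_app, IHN. simpl. ring.
Qed.

Lemma hb (c d : nat -> R) x y : x <= y -> (forall z, x <= z <= y -> exists n, c n < z < d n) ->
  exists N, forall z, x <= z <= y -> exists n, (n <= N)%nat /\ c n < z < d n.
Proof.
  intros Hxy Hc.
  set (E := fun z => x <= z <= y /\ exists N, forall w, x <= w <= z -> exists n, (n <= N)%nat /\ c n < w < d n).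
  assert (Ex : E x).
  { split; [lra|]. destruct (Hc x ltac:(lra)) as [n0 Hn0]. exists n0.
    intros w Hw. exists n0. split; [lia|]. replace w with x by lra. auto. }
  assert (Hb : bound E) by (exists y; intros z [Hz _]; lra).
  destruct (completeness E Hb (ex_intro _ x Ex)) as [s [Hs1 Hs2]].
  assert (Hxs : x <= s) by (apply Hs1; auto).
  assert (Hsy : s <= y) by (apply Hs2; intros z [Hz _]; lra).
  destruct (Hc s ltac:(lra)) as [n0 Hn0].
  destruct (classic (exists z, E z /\ c n0 < z)) as [[z [[Hz [N HN]] Hzc]]|Hno].
  2:{ exfalso. assert (s <= c n0); [|lra]. apply Hs2. intros z Ez.
      destruct (Rle_dec z (c n0)); auto. exfalso; apply Hno; exists z; split; auto; lra. }
  assert (Hext : forall z', x <= z' <= Rmin y ((s + d n0)/2) -> E z').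
  { intros z' Hz'. assert (z' <= y) by (eapply Rle_trans; [apply Hz'|apply Rmin_l]).
    assert (z' <= (s + d n0)/2) by (eapply Rle_trans; [apply Hz'|apply Rmin_r]).
    split; [lra|]. exists (max N n0). intros w Hw.
    destruct (Rle_dec w z) as [Hwz|Hwz].
    - destruct (HN w ltac:(lra)) as [n [Hn Hnw]]. exists n; split; auto; lia.
    - exists n0; split; [lia|lra]. }
  destruct (Rle_dec y ((s + d n0)/2)) as [Hy|Hy].
  - assert (Ey : E y) by (apply Hext; split; [lra|]; rewrite Rmin_left; lra).
    destruct Ey as [_ [N' HN']]. exists N'. auto.
  - exfalso. assert (E ((s + d n0)/2)) by (apply Hext; split; [lra|]; rewrite Rmin_right; lra).
    assert ((s + d n0)/2 <= s) by (apply Hs1; auto). lra.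
Qed.

Lemma nontrivial a b (P : R -> Prop) : a < b -> null_set (fun t => a < t < b /\ P t) ->
  exists t, a < t < b /\ ~ P t.
Proof.
  intros Hab Hnull.
  destruct (classic (exists t, a < t < b /\ ~ P t)) as [H|H]; auto. exfalso.
  assert (HP : forall t, a < t < b -> P t).
  { intros t Ht. apply NNPP. intro. apply H. exists t; auto. }
  destruct (Hnull ((b - a)/2) ltac:(lra)) as [c [d [Hcd [Hcov Hsum]]]].
  set (x := a + (b - a)/4). set (y := b - (b - a)/4).
  assert (Hc : forall z, x <= z <= y -> exists n, c n < z < d n).
  { intros z Hz. apply Hcov. unfold x, y in Hz. split; [lra|]. apply HP; lra. }
  destruct (hb c d x y ltac:(unfold x, y; lra) Hc) as [N HN].
  assert (Hl := cover_fin _ (map (fun n => (c n, d n)) (seq 0 (S N))) (Nat.le_refl _)).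
  rewrite lsum_seq in Hl.
  assert (y - x <= sum_f_R0 (fun n => d n - c n) N).
  { apply Hl.
    - intros p Hp. apply in_map_iff in Hp. destruct Hp as [n [<- _]]. simpl; auto.
    - unfold x, y; lra.
    - intros z Hz. destruct (HN z Hz) as [n [Hn Hnz]]. exists (c n, d n); split; auto.
      apply in_map_iff. exists n; split; auto. apply in_seq. lia. }
  specialize (Hsum N). unfold x, y in *. lra.
Qed.

Lemma rp_deriv a y s : a < s -> is_derive (fun s => Rpower (s - a) y) s (y * Rpower (s - a) (y - 1)).
Proof.
  intros Hs. apply is_derive_Reals.
  assert (H1 : derivable_pt_lim (fun s => s - a) s 1).
  { intros eps He. exists (mkposreal eps He). intros h Hh _.
    replace ((s + h - a - (s - a)) / h - 1) with 0 by (field; auto).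
    rewrite Rabs_R0; auto. }
  pose proof (derivable_pt_lim_comp _ _ s 1 _ H1 (derivable_pt_lim_power (s - a) y ltac:(lra))) as H.
  rewrite Rmult_1_r in H. exact H.
Qed.

Lemma rp_cont a y s : a < s -> continuous (fun s => Rpower (s - a) y) s.
Proof. intros. apply (@ex_derive_continuous R_AbsRing R_NormedModule). eexists. apply rp_deriv; auto. Qed.

Lemma rp_pos x y : 0 < Rpower x y.
Proof. unfold Rpower. apply exp_pos. Qed.

Lemma cmult (f g : R -> R) x : continuous f x -> continuous g x -> continuous (fun y => f y * g y) x.
Proof. intros; apply (@continuous_mult R_UniformSpace R_AbsRing f g x); auto. Qed.

Lemma copp (f : R -> R) x : continuous f x -> continuous (fun y => - f y) x.
Proof. intros; apply (@continuous_opp R_UniformSpace R_AbsRing R_NormedModule f x); auto. Qed.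

Lemma cconst (k : R) x : continuous (fun _ : R => k) x.
Proof. apply (@continuous_const R_UniformSpace R_UniformSpace). Qed.

Lemma exc (f : R -> R) c1 c2 : (forall z, Rmin c1 c2 <= z <= Rmax c1 c2 -> continuous f z) -> ex_RInt f c1 c2.
Proof. intros; apply (@ex_RInt_continuous R_CompleteNormedModule); auto. Qed.

Lemma ftc (f df : R -> R) x y : (forall z, Rmin x y <= z <= Rmax x y -> is_derive f z (df z)) ->
  (forall z, Rmin x y <= z <= Rmax x y -> continuous df z) -> is_RInt df x y (f y - f x).
Proof. intros; apply (@is_RInt_derive R_CompleteNormedModule); auto. Qed.

Definition fcl (q : R -> R) a b al s := Rabs (q (clamp a b s)) * Rpower (s - a) (al - 2).

Lemma fc_cont q a b al s : a <= b -> continuous_on_cc q a b -> a < s -> continuous (fcl q a b al) s.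
Proof.
  intros Hab Hq Hs. unfold fcl. apply cmult.
  - apply (continuous_Rabs_comp (fun s => q (clamp a b s))). apply cont_clamp'; auto.
  - apply rp_cont; auto.
Qed.

Lemma fc_ex q a b al c1 c2 : a <= b -> continuous_on_cc q a b -> a < c1 -> a < c2 ->
  ex_RInt (fcl q a b al) c1 c2.
Proof.
  intros. apply exc. intros z Hz. apply fc_cont; auto.
  assert (a < Rmin c1 c2) by (apply Rmin_glb_lt; auto). lra.
Qed.

Lemma fc_nonneg q a b al s : 0 <= fcl q a b al s.
Proof. unfold fcl. apply Rmult_le_pos; [apply Rabs_pos| left; apply rp_pos]. Qed.

Lemma chas (f : R -> R) x y z : ex_RInt f x y -> ex_RInt f y z -> RInt f x y + RInt f y z = RInt f x z.
Proof. intros. exact (RInt_Chasles f x y z H H0). Qed.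

Lemma F_mono q a b al c1 c2 d : a <= b -> continuous_on_cc q a b -> a < c1 <= c2 -> a < d ->
  RInt (fcl q a b al) c2 d <= RInt (fcl q a b al) c1 d.
Proof.
  intros Hab Hq Hc Hd. rewrite <- (chas _ c1 c2 d) by (apply fc_ex; auto; lra).
  assert (0 <= RInt (fcl q a b al) c1 c2); [|lra].
  apply RInt_ge_0; [lra| apply fc_ex; auto; lra| intros; apply fc_nonneg].
Qed.

Lemma F_bound q a b al : 1 < al -> a < b -> continuous_on_cc q a b ->
  exists B, forall c, a < c <= b -> RInt (fcl q a b al) c b <= B.
Proof.
  intros Hal Hab Hq.
  destruct (continuity_ab_maj (fun s => Rabs (q (clamp a b s))) a b ltac:(lra)) as [cK [HK HcK]].
  { intros c _. apply continuity_pt_filterlim. apply (continuous_Rabs_comp (fun s => q (clamp a b s))). apply cont_clamp'; auto; lra. }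
  set (K := Rabs (q (clamp a b cK))) in *.
  assert (HK0 : 0 <= K) by apply Rabs_pos.
  set (G := fun s => K / (al - 1) * Rpower (s - a) (al - 1)).
  exists (G b). intros c Hc.
  set (g := fun s => K * Rpower (s - a) (al - 2)).
  assert (Hi : is_RInt g c b (G b - G c)).
  { apply ftc.
    - intros x Hx. rewrite Rmin_left in Hx by lra. rewrite Rmax_right in Hx by lra.
      unfold G, g. replace (K * Rpower (x - a) (al - 2)) with (K / (al - 1) * ((al - 1) * Rpower (x - a) (al - 1 - 1))).
      + apply is_derive_scal. apply rp_deriv. lra.
      + replace (al - 1 - 1) with (al - 2) by ring. field. lra.
    - intros x Hx. rewrite Rmin_left in Hx by lra. rewrite Rmax_right in Hx by lra.
      unfold g. apply cmult. apply cconst. apply rp_cont. lra. }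
  assert (Hv : RInt g c b = G b - G c) by (apply (@is_RInt_unique R_CompleteNormedModule); exact Hi).
  assert (Hle : RInt (fcl q a b al) c b <= RInt g c b).
  { apply RInt_le; [lra| apply fc_ex; auto; lra| eexists; apply Hi|].
    intros x Hx. unfold fcl, g. apply Rmult_le_compat_r; [left; apply rp_pos|].
    apply HK. lra. }
  rewrite Hv in Hle.
  assert (0 <= G c).
  { unfold G. apply Rmult_le_pos; [|left; apply rp_pos]. apply Rdiv_le_0_compat; lra. }
  lra.
Qed.

Lemma fc_eq q a b al c x : a < c <= b -> Rmin c b < x < Rmax c b ->
  fcl q a b al x = Rabs (q x) * Rpower (x - a) (al - 2).
Proof.
  intros Hc Hx. rewrite Rmin_left in Hx by lra. rewrite Rmax_right in Hx by lra.
  unfold fcl. rewrite clamp_id by lra. auto.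
Qed.

Lemma improper_ex q a b al : 1 < al < 2 -> a < b -> continuous_on_cc q a b ->
  exists I, improper_integral_left (fun s => Rabs (q s) * Rpower (s - a) (al - 2)) a b I /\
    forall m, a < m < b -> RInt (fcl q a b al) m b <= I.
Proof.
  intros Hal Hab Hq.
  destruct (F_bound q a b al ltac:(lra) Hab Hq) as [B HB].
  set (E := fun y => exists c, a < c < b /\ y = RInt (fcl q a b al) c b).
  assert (Hb : bound E) by (exists B; intros y [c [Hc ->]]; apply HB; lra).
  assert (Hne : exists y, E y) by (eexists; exists ((a + b) / 2); split; [lra| reflexivity]).
  destruct (completeness E Hb Hne) as [I [HI1 HI2]].
  exists I; split.
  - intros eps Heps.
    destruct (classic (exists c, a < c < b /\ I - eps < RInt (fcl q a b al) c b)) as [[c0 [Hc0 Hlt]]|Hno].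
    2:{ exfalso. assert (I <= I - eps); [|lra]. apply HI2. intros y [c [Hc ->]].
        destruct (Rle_dec (RInt (fcl q a b al) c b) (I - eps)); auto.
        exfalso; apply Hno; exists c; split; auto; lra. }
    exists (c0 - a). split; [lra|]. intros c Hc Hcb.
    assert (Hex : ex_RInt (fun s => Rabs (q s) * Rpower (s - a) (al - 2)) c b).
    { apply (ex_RInt_ext (fcl q a b al)).
      - intros x Hx. apply (fc_eq q a b al c x); auto; lra.
      - apply fc_ex; auto; lra. }
    exists (ex_RInt_Reals_0 _ _ _ Hex). rewrite <- RInt_Reals.
    rewrite <- (RInt_ext (fcl q a b al)) by (intros x Hx; apply (fc_eq q a b al c x); auto; lra).
    assert (H1 : RInt (fcl q a b al) c0 b <= RInt (fcl q a b al) c b) by (apply F_mono; auto; lra).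
    assert (H2 : RInt (fcl q a b al) c b <= I) by (apply HI1; exists c; split; [lra|auto]).
    unfold Rabs; destruct Rcase_abs; lra.
  - intros m Hm. apply HI1. exists m; auto.
Qed.

Lemma arith a b c U A B M I : a < c < b -> (c - a) * A = U -> (b - c) * B = - U ->
  M = Rabs U -> 0 < M -> Rabs (B - A) <= M * I -> I >= 4 / (b - a).
Proof.
  intros Hc HA HB HMU HM Hle.
  set (x := c - a) in *. set (y := b - c) in *.
  assert (Hx : 0 < x) by (unfold x; lra). assert (Hy : 0 < y) by (unfold y; lra).
  set (S := (x + y) / (x * y)).
  assert (HS : 0 < S) by (unfold S; apply Rdiv_lt_0_compat; nra).
  assert (E : B - A = - U * S).
  { unfold S. apply Rmult_eq_reg_l with (x * y); [|nra].
    replace (x * y * (B - A)) with (x * (y * B) - y * (x * A)) by ring.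
    rewrite HA, HB. field; repeat split; lra. }
  rewrite E, Rabs_mult, Rabs_Ropp, (Rabs_right S), <- HMU in Hle by lra.
  assert (S <= I) by (apply Rmult_le_reg_l with M; auto).
  assert (E2 : S - 4 / (b - a) = (x - y) ^ 2 / (x * y * (x + y))).
  { replace (b - a) with (x + y) by (unfold x, y; ring). unfold S. field; repeat split; lra. }
  assert (0 <= (x - y) ^ 2 / (x * y * (x + y))).
  { apply Rdiv_le_0_compat; [apply pow2_ge_0|]. apply Rmult_lt_0_compat; nra. }
  lra.
Qed.

Lemma rint_scal (f : R -> R) x y M : ex_RInt f x y -> RInt (fun t => M * f t) x y = M * RInt f x y.
Proof. intros. exact (RInt_scal f x y M H). Qed.

Lemma rint_unique (f : R -> R) x y l : is_RInt f x y l -> RInt f x y = l.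
Proof. intros. apply (@is_RInt_unique R_CompleteNormedModule); auto. Qed.

Theorem theorem2 (alpha a b : R) (q u : R -> R) :
  1 < alpha < 2 -> a < b ->
  continuous_on_cc q a b ->
  (exists u' : R -> R,
      deriv_on_cc u u' a b /\
      continuous_on_cc u' a b /\
      abs_continuous_on u' a b /\
      (forall t, a < t < b -> exists l, derivable_pt_lim u' t l) /\
      (forall t, a < t < b -> conformable_deriv2_lim alpha a u' t (- (q t * u t))) /\
      u a = 0 /\ u b = 0) ->
  null_set (fun t => a < t < b /\ u t = 0) ->
  exists I : R,
    improper_integral_left (fun s => Rabs (q s) * Rpower (s - a) (alpha - 2)) a b I /\
    I >= 4 / (b - a).
Proof.
  intros Hal Hab Hq [u' [Hd [_ [_ [_ [Hconf [Hua Hub]]]]]]] Hnull.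
  destruct (improper_ex q a b alpha Hal Hab Hq) as [I [HI HIm]]. exists I; split; auto.
  destruct (nontrivial a b (fun t => u t = 0) Hab Hnull) as [t0 [Ht0 Hut0]].
  set (ue := fun s => u (clamp a b s)).
  assert (Hcu : forall t, continuity_pt ue t)
    by (apply cont_clamp; [lra| eapply deriv_cont; eauto]).
  destruct (continuity_ab_maj (fun s => Rabs (ue s)) a b) as [cM [HM HcM]]; [lra| |].
  { intros c _. apply continuity_pt_filterlim. apply (continuous_Rabs_comp ue).
    apply continuity_pt_filterlim; auto. }
  assert (HM' : forall c, a <= c <= b -> Rabs (u c) <= Rabs (u cM)).
  { intros c Hc. specialize (HM c Hc). unfold ue in HM. rewrite !clamp_id in HM by lra. auto. }
  set (M := Rabs (u cM)) in *.
  assert (HMpos : 0 < M).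
  { apply Rlt_le_trans with (Rabs (u t0)); [apply Rabs_pos_lt; auto| apply HM'; lra]. }
  assert (HcMa : a < cM).
  { destruct (Req_dec cM a) as [E|E]; [|lra]. unfold M in HMpos. rewrite E, Hua, Rabs_R0 in HMpos. lra. }
  assert (HcMb : cM < b).
  { destruct (Req_dec cM b) as [E|E]; [|lra]. unfold M in HMpos. rewrite E, Hub, Rabs_R0 in HMpos. lra. }
  assert (Hder : forall t, a < t < b -> derivable_pt_lim ue t (u' t))
    by (intros; apply deriv_interior; auto).
  destruct (MVT ue id a cM
    (fun c P => exist _ (u' c) (Hder c (conj (proj1 P) (Rlt_trans _ _ _ (proj2 P) HcMb))))
    (fun c _ => exist _ 1 (derivable_pt_lim_id c)) HcMa (fun c _ => Hcu c)
    (fun c _ => derivable_continuous_pt _ _ (derivable_pt_id c))) as [x1 [P1 E1]].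
  destruct (MVT ue id cM b
    (fun c P => exist _ (u' c) (Hder c (conj (Rlt_trans _ _ _ HcMa (proj1 P)) (proj2 P))))
    (fun c _ => exist _ 1 (derivable_pt_lim_id c)) HcMb (fun c _ => Hcu c)
    (fun c _ => derivable_continuous_pt _ _ (derivable_pt_id c))) as [x2 [P2 E2]].
  cbn [derive_pt proj1_sig id] in E1, E2. unfold ue in E1, E2.
  rewrite !clamp_id in E1, E2 by lra. rewrite Hua in E1. rewrite Hub in E2.
  set (df := fun t => - (q (clamp a b t) * Rpower (t - a) (alpha - 2) * u (clamp a b t))).
  assert (HD2 : forall t, a < t < b -> is_derive u' t (df t)).
  { intros t Ht. apply is_derive_Reals.
    assert (Hk : 0 < Rpower (t - a) (1 - (alpha - 1))) by apply rp_pos.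
    pose proof (conf_deriv (alpha - 1) a u' t _ Hk (Hconf t Ht)) as H.
    unfold df. rewrite !clamp_id by lra.
    replace (alpha - 2) with (- (1 - (alpha - 1))) by ring. rewrite Rpower_Ropp.
    replace (- (q t * / Rpower (t - a) (1 - (alpha - 1)) * u t))
      with (- (q t * u t) / Rpower (t - a) (1 - (alpha - 1))) by (field; lra).
    exact H. }
  assert (Hcd : forall t, a < t < b -> continuous df t).
  { intros t Ht. unfold df. apply copp. apply cmult; [apply cmult|].
    - apply cont_clamp'; auto; lra.
    - apply rp_cont; lra.
    - apply cont_clamp'; [lra| eapply deriv_cont; eauto]. }
  assert (Hi : is_RInt df x1 x2 (u' x2 - u' x1)).
  { apply ftc; intros z Hz; rewrite Rmin_left in Hz by lra; rewrite Rmax_right in Hz by lra.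
    - apply HD2; lra.
    - apply Hcd; lra. }
  assert (Hexd : ex_RInt df x1 x2) by (eexists; exact Hi).
  assert (Hv : RInt df x1 x2 = u' x2 - u' x1) by (apply rint_unique; auto).
  assert (Hab1 := abs_RInt_le df x1 x2 ltac:(lra) Hexd).
  rewrite Hv in Hab1.
  assert (Hfc1 : ex_RInt (fcl q a b alpha) x1 x2) by (apply fc_ex; auto; lra).
  assert (Hle2 : RInt (fun t => Rabs (df t)) x1 x2 <= RInt (fun t => M * fcl q a b alpha t) x1 x2).
  { apply RInt_le; [lra| | |].
    - apply exc. intros z Hz; rewrite Rmin_left in Hz by lra; rewrite Rmax_right in Hz by lra.
      apply (continuous_Rabs_comp df). apply Hcd; lra.
    - apply exc. intros z Hz; rewrite Rmin_left in Hz by lra; rewrite Rmax_right in Hz by lra.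
      apply cmult; [apply cconst| apply fc_cont; auto; lra].
    - intros x Hx. unfold df, fcl. rewrite !clamp_id by lra.
      rewrite Rabs_Ropp, !Rabs_mult, (Rabs_right (Rpower (x - a) (alpha - 2)))
        by (left; apply rp_pos).
      replace (M * (Rabs (q x) * Rpower (x - a) (alpha - 2)))
        with (Rabs (q x) * Rpower (x - a) (alpha - 2) * M) by ring.
      apply Rmult_le_compat_l.
      + apply Rmult_le_pos; [apply Rabs_pos| left; apply rp_pos].
      + apply HM'; lra. }
  rewrite rint_scal in Hle2 by auto.
  assert (Hle3 : RInt (fcl q a b alpha) x1 x2 <= RInt (fcl q a b alpha) x1 b).
  { rewrite <- (chas _ x1 x2 b) by (apply fc_ex; auto; lra).
    assert (0 <= RInt (fcl q a b alpha) x2 b); [|lra].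
    apply RInt_ge_0; [lra| apply fc_ex; auto; lra| intros; apply fc_nonneg]. }
  assert (Hle4 := HIm x1 ltac:(lra)).
  unfold id in E1, E2.
  apply (arith a b cM (u cM) (u' x1) (u' x2) M I); [lra|lra|lra|reflexivity|auto|].
  apply Rle_trans with (M * RInt (fcl q a b alpha) x1 x2); [lra|].
  apply Rmult_le_compat_l; lra.
Qed.
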